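(* For every $k\in\mathbb{N}$, $$L_{\mathbb{R},4k}\ge\left[\sum_{j=0}^{2k}\binom{4k}{2j}\left|\frac{B_j}{\binom{4k}{2j}}\right|^{\frac{8k}{4k+1}}\right]^{\frac{4k+1}{8k}},$$ where $$B_j=\sum_{\ell=0}^{\lfloor j/2\rfloor}\frac{k!\,(-3)^{j-2\ell}}{\ell!\,(j-2\ell)!\,(k-j+\ell)!},\qquad j=0,\dots,2k$$ (terms with $k-j+\ell<0$ being $0$); the $B_j$ are the coefficients of $x^{2j}y^{4k-2j}$ in $(x^4+y^4-3x^2y^2)^k$.
   Context: All spaces are real. $\check P$ is the polar of an $m$-homogeneous polynomial $P$ (the unique symmetric $m$-linear form with $\check P(x,\dots,x)=P(x)$). For $x_1,\dots,x_N$ in a Banach space $X$, $\|(x_j)\|_{w,1}=\sup\{\sum_j|\varphi(x_j)|:\varphi\in X',\|\varphi\|\le1\}$. $L_{\mathbb{R},m}$ is the smallest constant $L$ such that for every real Banach space $X$, every continuous $m$-homogeneous $P:X\to\mathbb{R}$, every $N$ and all $x^{(k)}_j\in X$: $\big(\sum_{j_1,\dots,j_m=1}^N|\check P(x^{(1)}_{j_1},\dots,x^{(m)}_{j_m})|^{\frac{2m}{m+1}}\big)^{\frac{m+1}{2m}}\le L\|P\|\prod_{k=1}^m\|(x^{(k)}_j)_{j=1}^N\|_{w,1}$. $\lfloor h\rfloor$ is the integer part. *)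

(* Defs.v *)
From Stdlib Require Import Reals Lra Lia Arith Factorial.
Open Scope R_scope.

Record RBanach := {
  vcar :> Type;
  vzero : vcar;
  vadd : vcar -> vcar -> vcar;
  vopp : vcar -> vcar;
  vscal : R -> vcar -> vcar;
  vnorm : vcar -> R;
  vadd_assoc : forall x y z, vadd x (vadd y z) = vadd (vadd x y) z;
  vadd_comm : forall x y, vadd x y = vadd y x;
  vadd_0 : forall x, vadd x vzero = x;
  vadd_opp : forall x, vadd x (vopp x) = vzero;
  vscal_1 : forall x, vscal 1 x = x;
  vscal_assoc : forall a b x, vscal a (vscal b x) = vscal (a * b) x;
  vscal_distr_v : forall a x y, vscal a (vadd x y) = vadd (vscal a x) (vscal a y);
  vscal_distr_s : forall a b x, vscal (a + b) x = vadd (vscal a x) (vscal b x);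
  vnorm_nonneg : forall x, 0 <= vnorm x;
  vnorm_eq0 : forall x, vnorm x = 0 -> x = vzero;
  vnorm_scal : forall a x, vnorm (vscal a x) = Rabs a * vnorm x;
  vnorm_triangle : forall x y, vnorm (vadd x y) <= vnorm x + vnorm y;
  vcomplete : forall u : nat -> vcar,
    (forall eps, 0 < eps -> exists N, forall n p, (N <= n)%nat -> (N <= p)%nat ->
        vnorm (vadd (u n) (vopp (u p))) < eps) ->
    exists l, forall eps, 0 < eps -> exists N, forall n, (N <= n)%nat ->
        vnorm (vadd (u n) (vopp l)) < eps
}.

Arguments vzero {_}. Arguments vadd {_}. Arguments vopp {_}.
Arguments vscal {_}. Arguments vnorm {_}.

Fixpoint fsum (N : nat) (f : nat -> R) : R :=
  match N with O => 0 | S n => fsum n f + f n end.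
Fixpoint fprod (N : nat) (f : nat -> R) : R :=
  match N with O => 1 | S n => fprod n f * f n end.

(* msum m N F = sum over all multi-indices (j_0,...,j_{m-1}) in {0..N-1}^m of F j *)
Fixpoint msum (m N : nat) (F : (nat -> nat) -> R) : R :=
  match m with
  | O => F (fun _ => O)
  | S m' => fsum N (fun j => msum m' N (fun J => F (fun i => if Nat.eqb i m' then j else J i)))
  end.

(* real power of a nonnegative base, with 0^y = 0 (used only for y > 0) *)
Definition rpow (x y : R) : R :=
  if Req_EM_T x 0 then 0 else Rpower x y.

Definition upd {X : Type} (u : nat -> X) (i : nat) (x : X) : nat -> X :=
  fun n => if Nat.eqb n i then x else u n.

Definition is_mlinear (X : RBanach) (m : nat) (A : (nat -> X) -> R) : Prop :=
  (forall u v : nat -> X, (forall i, (i < m)%nat -> u i = v i) -> A u = A v) /\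
  (forall (u : nat -> X) i a b (x y : X), (i < m)%nat ->
      A (upd u i (vadd (vscal a x) (vscal b y))) =
      a * A (upd u i x) + b * A (upd u i y)).

Definition is_symmetric (X : RBanach) (m : nat) (A : (nat -> X) -> R) : Prop :=
  forall (sigma : nat -> nat) (u : nat -> X),
    (forall i, (i < m)%nat -> (sigma i < m)%nat) ->
    (forall i j, (i < m)%nat -> (j < m)%nat -> sigma i = sigma j -> i = j) ->
    A (fun i => u (sigma i)) = A u.

(* continuity of an m-linear form = boundedness *)
Definition mlin_bounded (X : RBanach) (m : nat) (A : (nat -> X) -> R) : Prop :=
  exists C, forall u : nat -> X, Rabs (A u) <= C * fprod m (fun i => vnorm (u i)).

Definition is_polar_of (X : RBanach) (m : nat) (P : X -> R) (Pc : (nat -> X) -> R) : Prop :=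
  is_mlinear X m Pc /\ is_symmetric X m Pc /\ mlin_bounded X m Pc /\
  (forall x : X, Pc (fun _ => x) = P x).

Definition poly_norm_set (X : RBanach) (P : X -> R) : R -> Prop :=
  fun r => exists x : X, vnorm x <= 1 /\ r = Rabs (P x).

Definition dual_ball (X : RBanach) (phi : X -> R) : Prop :=
  (forall x y, phi (vadd x y) = phi x + phi y) /\
  (forall a x, phi (vscal a x) = a * phi x) /\
  (forall x, Rabs (phi x) <= vnorm x).

(* ||(x_j)_{j=1}^N||_{w,1} = sup_{phi in B_X'} sum_j |phi(x_j)|, x_j indexed 0..N-1 *)
Definition weak1_set (X : RBanach) (N : nat) (x : nat -> X) : R -> Prop :=
  fun r => exists phi, dual_ball X phi /\ r = fsum N (fun j => Rabs (phi (x j))).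

Definition BH_const (m : nat) (L : R) : Prop :=
  forall (X : RBanach) (P : X -> R) (Pc : (nat -> X) -> R),
    is_polar_of X m P Pc ->
    forall (N : nat) (x : nat -> nat -> X) (nP : R) (w : nat -> R),
      is_lub (poly_norm_set X P) nP ->
      (forall k, (k < m)%nat -> is_lub (weak1_set X N (x k)) (w k)) ->
      rpow (msum m N (fun J => rpow (Rabs (Pc (fun i => x i (J i))))
                                    (2 * INR m / (INR m + 1))))
           ((INR m + 1) / (2 * INR m))
      <= L * nP * fprod m w.

Definition Bcoef (k j : nat) : R :=
  fsum (S (Nat.div2 j)) (fun l =>
    if Nat.leb j (k + l) then
      INR (fact k) * (-3) ^ (j - 2 * l) /
      (INR (fact l) * INR (fact (j - 2 * l)) * INR (fact (k + l - j)))
    else 0).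

Definition lower_bound (k : nat) : R :=
  rpow (fsum (S (2 * k)) (fun j =>
          C (4 * k) (2 * j) *
          rpow (Rabs (Bcoef k j / C (4 * k) (2 * j))) (8 * INR k / (4 * INR k + 1))))
       ((4 * INR k + 1) / (8 * INR k)).

(* Main.v *)
Require Import Defs.
From Stdlib Require Import Reals Lra Lia Arith Factorial List Permutation FunctionalExtensionality.
Open Scope R_scope.

Lemma fsum_ext n f g : (forall i, (i < n)%nat -> f i = g i) -> fsum n f = fsum n g.
Proof. induction n; simpl; intros H; [reflexivity|]. rewrite IHn by (intros; apply H; lia). rewrite H by lia; reflexivity. Qed.

Lemma fsum_plus n f g : fsum n (fun i => f i + g i) = fsum n f + fsum n g.
Proof. induction n; simpl; [ring|]. rewrite IHn; ring. Qed.

Lemma fsum_scal n a f : fsum n (fun i => a * f i) = a * fsum n f.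
Proof. induction n; simpl; [ring|]. rewrite IHn; ring. Qed.

Lemma fsum_scal_r n a f : fsum n (fun i => f i * a) = fsum n f * a.
Proof. induction n; simpl; [ring|]. rewrite IHn; ring. Qed.

Lemma fsum_zero n f : (forall i, (i < n)%nat -> f i = 0) -> fsum n f = 0.
Proof. intros H. rewrite (fsum_ext n f (fun _ => 0)) by auto. induction n; simpl; [ring|]. rewrite IHn; [ring|]. intros; apply H; lia. Qed.

Lemma fsum_shift p n f : fsum (p + n) f = fsum p f + fsum n (fun c => f (p + c)%nat).
Proof. induction n; simpl. rewrite Nat.add_0_r; ring. rewrite Nat.add_succ_r; simpl; rewrite IHn; ring. Qed.

Lemma fsum_trunc n m f : (n <= m)%nat -> (forall i, (n <= i < m)%nat -> f i = 0) -> fsum m f = fsum n f.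
Proof. intros Hle H. replace m with (n + (m - n))%nat by lia. rewrite fsum_shift.
  rewrite (fsum_zero (m - n)); [ring|]. intros; apply H; lia. Qed.

Lemma fsum_S n f : fsum (S n) f = f O + fsum n (fun i => f (S i)).
Proof. replace (S n) with (1 + n)%nat by lia. rewrite fsum_shift. simpl. ring. Qed.

Lemma fsum_swap n m (h : nat -> nat -> R) :
  fsum n (fun a => fsum m (fun j => h a j)) = fsum m (fun j => fsum n (fun a => h a j)).
Proof. induction n; simpl. rewrite fsum_zero; auto. rewrite IHn. rewrite <- fsum_plus. reflexivity. Qed.

Lemma fsum_f_R0 n f : sum_f_R0 f n = fsum (S n) f.
Proof. induction n; simpl; [ring|]. rewrite IHn. simpl. ring. Qed.

Lemma fsum_even n f : (forall i, Nat.odd i = true -> f i = 0) ->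
  fsum (S (2 * n)) f = fsum (S n) (fun j => f (2 * j)%nat).
Proof. intros H. induction n. simpl. ring.
  replace (S (2 * S n)) with (S (S (S (2 * n)))) by lia.
  change (fsum (S (S (S (2 * n)))) f) with (fsum (S (2*n)) f + f (S (2*n)) + f (S (S (2 * n)))).
  rewrite IHn. rewrite (H (S (2 * n))).
  change (fsum (S (S n)) (fun j : nat => f (2 * j)%nat)) with (fsum (S n) (fun j : nat => f (2 * j)%nat) + f (2 * S n)%nat).
  replace (2 * S n)%nat with (S (S (2 * n))) by lia. ring.
  rewrite <- Nat.add_1_r. apply Nat.odd_odd. Qed.

Section Tri.
Variables (k : nat) (X Y : R).

Definition T (a j : nat) : R :=
  if andb (Nat.leb (2*a) j) (Nat.leb j (k+a)) then
    INR (fact k) * (-3) ^ (j - 2 * a) /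
      (INR (fact a) * INR (fact (j - 2 * a)) * INR (fact (k + a - j))) * (X ^ j * Y ^ (2 * k - j))
  else 0.

Lemma step1 a : (a <= k)%nat ->
  C k a * (X^2)^a * (Y * (-3 * X + Y)) ^ (k - a) = fsum (S (2 * k)) (fun j => T a j).
Proof.
  intros Ha.
  rewrite Rpow_mult_distr, binomial, fsum_f_R0.
  rewrite (fsum_trunc (2 * a + S (k - a)) (S (2 * k))).
  2: lia.
  2:{ intros i Hi; unfold T; replace (Nat.leb i (k + a)) with false by (symmetry; apply Nat.leb_gt; lia);
       rewrite Bool.andb_false_r; reflexivity. }
  rewrite fsum_shift. rewrite (fsum_zero (2 * a)).
  2:{ intros i Hi; unfold T; replace (Nat.leb (2*a) i) with false by (symmetry; apply Nat.leb_gt; lia); reflexivity. }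
  rewrite Rplus_0_l.
  rewrite <- !Rmult_assoc. rewrite <- fsum_scal.
  apply fsum_ext. intros c Hc. unfold T.
  replace (Nat.leb (2*a) (2*a+c)) with true by (symmetry; apply Nat.leb_le; lia).
  replace (Nat.leb (2*a+c) (k+a)) with true by (symmetry; apply Nat.leb_le; lia).
  simpl andb.
  replace (2 * a + c - 2 * a)%nat with c by lia.
  replace (k + a - (2 * a + c))%nat with (k - a - c)%nat by lia.
  replace (2 * k - (2 * a + c))%nat with ((k - a) + (k - a - c))%nat by lia.
  rewrite !pow_add, Rpow_mult_distr, <- pow_mult.
  unfold C.
  assert (H1 := INR_fact_neq_0 a). assert (H2 := INR_fact_neq_0 (k - a)).
  assert (H3 := INR_fact_neq_0 c). assert (H4 := INR_fact_neq_0 (k - a - c)).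
  field. auto.
Qed.

Lemma step3 j : (j <= 2 * k)%nat ->
  fsum (S k) (fun a => T a j) = Bcoef k j * (X ^ j * Y ^ (2 * k - j)).
Proof.
  intros Hj. unfold Bcoef. rewrite <- fsum_scal_r.
  assert (Hd := Nat.div2_odd j).
  assert (Hb : (Nat.b2n (Nat.odd j) <= 1)%nat) by (destruct (Nat.odd j); simpl; lia).
  rewrite (fsum_trunc (S (Nat.div2 j)) (S k)).
  - apply fsum_ext. intros a Ha. unfold T.
    replace (Nat.leb (2*a) j) with true by (symmetry; apply Nat.leb_le; lia).
    simpl andb. destruct (Nat.leb j (k + a)); ring.
  - lia.
  - intros a Ha. unfold T. replace (Nat.leb (2*a) j) with false by (symmetry; apply Nat.leb_gt; lia). reflexivity.
Qed.

Lemma tri_identity :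
  fsum (S (2 * k)) (fun j => Bcoef k j * (X ^ j * Y ^ (2 * k - j))) = (X ^ 2 + Y ^ 2 - 3 * X * Y) ^ k.
Proof.
  replace (X ^ 2 + Y ^ 2 - 3 * X * Y) with (X^2 + Y * (-3 * X + Y)) by ring.
  rewrite binomial, fsum_f_R0.
  rewrite (fsum_ext (S k) _ (fun a => fsum (S (2 * k)) (fun j => T a j))).
  2:{ intros a Ha. replace (C k a * (X ^ 2) ^ a * (Y * (-3 * X + Y)) ^ (k - a)) with
        (C k a * (X^2)^a * (Y * (-3 * X + Y)) ^ (k - a)) by ring. apply step1. lia. }
  rewrite fsum_swap. apply fsum_ext. intros j Hj. symmetry. apply step3. lia.
Qed.
End Tri.

Definition nrm (p : R * R) : R := Rmax (Rabs (fst p)) (Rabs (snd p)).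

Lemma nrm_cauchy_fst (u : nat -> R * R) :
  (forall eps, 0 < eps -> exists N, forall n p, (N <= n)%nat -> (N <= p)%nat ->
        nrm (fst (u n) + - fst (u p), snd (u n) + - snd (u p)) < eps) ->
  Cauchy_crit (fun n => fst (u n)) /\ Cauchy_crit (fun n => snd (u n)).
Proof.
  intros H; split; intros eps He; destruct (H eps He) as [N HN]; exists N; intros n p Hn Hp;
  specialize (HN n p Hn Hp); unfold nrm in HN; simpl in HN; unfold Rdist.
  - eapply Rle_lt_trans; [apply Rmax_l|]. exact HN.
  - eapply Rle_lt_trans; [apply Rmax_r|]. exact HN.
Qed.

Definition Xb : RBanach.
Proof.
  refine {| vcar := (R * R)%type; vzero := (0, 0);
            vadd := fun p q => (fst p + fst q, snd p + snd q);
            vopp := fun p => (- fst p, - snd p);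
            vscal := fun a p => (a * fst p, a * snd p);
            vnorm := nrm |}.
  - intros [] [] []; simpl; f_equal; ring.
  - intros [] []; simpl; f_equal; ring.
  - intros []; simpl; f_equal; ring.
  - intros []; simpl; f_equal; ring.
  - intros []; simpl; f_equal; ring.
  - intros a b []; simpl; f_equal; ring.
  - intros a [] []; simpl; f_equal; ring.
  - intros a b []; simpl; f_equal; ring.
  - intros []; unfold nrm; simpl. eapply Rle_trans; [apply Rabs_pos|apply Rmax_l].
  - intros [x y]; unfold nrm; simpl; intros H.
    assert (Rabs x <= 0) by (rewrite <- H; apply Rmax_l).
    assert (Rabs y <= 0) by (rewrite <- H; apply Rmax_r).
    assert (Rabs x = 0) by (pose proof (Rabs_pos x); lra).
    assert (Rabs y = 0) by (pose proof (Rabs_pos y); lra).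
    f_equal; [destruct (Req_dec x 0)|destruct (Req_dec y 0)]; auto;
      exfalso; [apply (Rabs_no_R0 x)|apply (Rabs_no_R0 y)]; auto.
  - intros a [x y]; unfold nrm; simpl. rewrite !Rabs_mult.
    pose proof (Rabs_pos a). unfold Rmax.
    destruct (Rle_dec (Rabs x) (Rabs y)); destruct (Rle_dec (Rabs a * Rabs x) (Rabs a * Rabs y)); try reflexivity.
    + assert (Rabs a * Rabs x <= Rabs a * Rabs y) by (apply Rmult_le_compat_l; auto). contradiction.
    + assert (Rabs a = 0 \/ Rabs a > 0) as [E|E] by lra. rewrite E; ring.
      exfalso. apply n. apply Rmult_le_reg_l with (Rabs a); lra.
  - intros [x1 y1] [x2 y2]; unfold nrm; simpl. apply Rmax_lub.
    + eapply Rle_trans; [apply Rabs_triang|]. apply Rplus_le_compat; apply Rmax_l.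
    + eapply Rle_trans; [apply Rabs_triang|]. apply Rplus_le_compat; apply Rmax_r.
  - intros u H. destruct (nrm_cauchy_fst u H) as [H1 H2].
    destruct (R_complete _ H1) as [l1 Hl1]. destruct (R_complete _ H2) as [l2 Hl2].
    exists (l1, l2). intros eps He.
    destruct (Hl1 eps He) as [N1 HN1]. destruct (Hl2 eps He) as [N2 HN2].
    exists (Nat.max N1 N2). intros n Hn. unfold nrm; simpl. apply Rmax_lub_lt.
    + specialize (HN1 n ltac:(lia)). exact HN1.
    + specialize (HN2 n ltac:(lia)). exact HN2.
Defined.

Fixpoint e (l : list (R * R)) (i : nat) : R :=
  match l with
  | nil => if Nat.eqb i 0 then 1 else 0
  | p :: l' => snd p * e l' i + match i with O => 0 | S i' => fst p * e l' i' end
  end.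

Lemma e_perm l l' : Permutation l l' -> forall i, e l i = e l' i.
Proof.
  induction 1; intros i; simpl; try reflexivity.
  - destruct i; rewrite !IHPermutation; reflexivity.
  - destruct i as [|[|i]]; ring.
  - rewrite IHPermutation1; auto.
Qed.

Lemma e_lin l1 l2 a b x y i :
  e (l1 ++ (a * fst x + b * fst y, a * snd x + b * snd y) :: l2) i =
  a * e (l1 ++ x :: l2) i + b * e (l1 ++ y :: l2) i.
Proof.
  revert i; induction l1; intros i; simpl.
  - destruct i; simpl; ring.
  - destruct i; rewrite !IHl1; ring.
Qed.

Fixpoint bin (n i : nat) : R :=
  match n, i with
  | _, O => 1
  | O, S _ => 0
  | S n', S i' => bin n' i' + bin n' (S i')
  end.

Lemma bin_gt n i : (n < i)%nat -> bin n i = 0.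
Proof. revert i; induction n; intros [|i] H; simpl; try lia; auto.
  rewrite !IHn by lia. ring. Qed.

Lemma bin_C n i : (i <= n)%nat -> bin n i = C n i.
Proof.
  revert i; induction n; intros [|i] H.
  - unfold C; simpl; field.
  - lia.
  - unfold C; rewrite Nat.sub_0_r. change (bin (S n) 0) with 1. change (fact 0) with 1%nat. simpl (INR 1). field. apply INR_fact_neq_0.
  - simpl bin. destruct (Nat.eq_dec i n) as [->|Hn].
    + rewrite (bin_gt n (S n)) by lia. rewrite IHn by lia. unfold C. rewrite !Nat.sub_diag. field. repeat split; apply INR_fact_neq_0.
    + rewrite !IHn by lia. apply pascal. lia.
Qed.

Lemma e_repeat a b n i : e (repeat (a, b) n) i = bin n i * a ^ i * b ^ (n - i).
Proof.
  revert i; induction n; intros i.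
  - destruct i; simpl; ring.
  - simpl repeat. simpl e. destruct i as [|i].
    + rewrite IHn. replace (bin n 0) with 1 by (destruct n; reflexivity). rewrite Nat.sub_0_r. simpl. ring.
    + rewrite !IHn. simpl bin.
      destruct (Nat.lt_ge_cases i n).
      * simpl. replace (n - i)%nat with (S (n - S i)) by lia. simpl. ring.
      * rewrite (bin_gt n (S i)) by lia. simpl. ring.
Qed.

Lemma pascal_sum n g : fsum (S (S n)) (fun i => bin (S n) i * g i) =
  fsum (S n) (fun i => bin n i * g (S i)) + fsum (S n) (fun i => bin n i * g i).
Proof.
  rewrite fsum_S. simpl bin at 1.
  rewrite (fsum_ext (S n) (fun i => bin (S n) (S i) * g (S i))
             (fun i => bin n i * g (S i) + bin n (S i) * g (S i))) by (intros; simpl; ring).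
  rewrite fsum_plus.
  assert (E : fsum (S n) (fun i => bin n i * g i) = g O + fsum (S n) (fun i => bin n (S i) * g (S i))).
  { change (fsum (S n) (fun i => bin n (S i) * g (S i))) with
      (fsum n (fun i => bin n (S i) * g (S i)) + bin n (S n) * g (S n)).
    rewrite (bin_gt n (S n)) by lia. rewrite fsum_S. destruct n; simpl; ring. }
  rewrite E. ring.
Qed.

Fixpoint cntz (l : list nat) : nat :=
  match l with nil => O | j :: l' => ((if Nat.eqb j 0 then 1 else 0) + cntz l')%nat end.

Lemma cntz_app l j : cntz (l ++ j :: nil) = (cntz l + (if Nat.eqb j 0 then 1 else 0))%nat.
Proof. induction l; simpl; [lia|]. rewrite IHl; lia. Qed.

Lemma cntz_le l : (cntz l <= length l)%nat.
Proof. induction l; simpl; [lia|]. destruct (Nat.eqb a 0); lia. Qed.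

Lemma msum_ext m N F G : (forall J, F J = G J) -> msum m N F = msum m N G.
Proof. intros H. f_equal. apply functional_extensionality; auto. Qed.

Lemma fsum2 g : fsum 2 g = g 0%nat + g 1%nat.
Proof. simpl; ring. Qed.

Lemma msum_count m : forall h r,
  msum m 2 (fun J => h (cntz (map J (seq 0 m)) + r)%nat) = fsum (S m) (fun i => bin m i * h (i + r)%nat).
Proof.
  induction m; intros h r.
  - simpl. ring.
  - cbn [msum]. rewrite fsum2.
    assert (Hmap : forall (j : nat) (J : nat -> nat), map (fun i => if Nat.eqb i m then j else J i) (seq 0 (S m)) =
                               map J (seq 0 m) ++ j :: nil).
    { intros j J. rewrite seq_S, map_app. simpl. rewrite Nat.eqb_refl. f_equal.
      apply map_ext_in. intros i Hi. apply in_seq in Hi. replace (Nat.eqb i m) with false; auto.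
      symmetry; apply Nat.eqb_neq; lia. }
    rewrite (msum_ext m 2 _ (fun J => h (cntz (map J (seq 0 m)) + (1 + r))%nat)).
    2:{ intros J. rewrite Hmap, cntz_app. simpl. f_equal. lia. }
    rewrite (msum_ext m 2 (fun J => h (cntz (map (fun i => if Nat.eqb i m then 1%nat else J i) (seq 0 (S m))) + r)%nat) (fun J => h (cntz (map J (seq 0 m)) + r)%nat)).
    2:{ intros J. rewrite Hmap, cntz_app. simpl. f_equal. lia. }
    rewrite !IHm. rewrite (pascal_sum m (fun i => h (i + r)%nat)).
    rewrite (fsum_ext (S m) (fun i => bin m i * h (i + (1 + r))%nat) (fun i => bin m i * h (S i + r)%nat))
      by (intros; f_equal; f_equal; lia). ring.
Qed.

Definition basis (j : nat) : R * R := if Nat.eqb j 0 then (1, 0) else (0, 1).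

Lemma e_basis l i : e (map basis l) i = if Nat.eqb i (cntz l) then 1 else 0.
Proof.
  revert i; induction l; intros i; simpl; auto.
  destruct (Nat.eqb a 0) eqn:E.
  - replace (basis a) with (1, 0) by (unfold basis; rewrite E; auto). simpl.
    destruct i; simpl. ring. rewrite !IHl. ring.
  - replace (basis a) with (0, 1) by (unfold basis; rewrite E; auto). simpl.
    rewrite IHl. destruct i; simpl; ring.
Qed.

Lemma fsum_delta n f r : fsum n (fun i => f i * (if Nat.eqb i r then 1 else 0)) = if Nat.ltb r n then f r else 0.
Proof.
  induction n; simpl; [ring|]. rewrite IHn.
  destruct (Nat.lt_total r n) as [H|[H|H]].
  - replace (Nat.ltb r n) with true by (symmetry; apply Nat.ltb_lt; lia).
    replace (Nat.ltb r (S n)) with true by (symmetry; apply Nat.ltb_lt; lia).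
    replace (Nat.eqb n r) with false by (symmetry; apply Nat.eqb_neq; lia). ring.
  - subst n. rewrite Nat.ltb_irrefl, Nat.eqb_refl.
    replace (Nat.ltb r (S r)) with true by (symmetry; apply Nat.ltb_lt; lia). ring.
  - replace (Nat.ltb r n) with false by (symmetry; apply Nat.ltb_ge; lia).
    replace (Nat.ltb r (S n)) with false by (symmetry; apply Nat.ltb_ge; lia).
    replace (Nat.eqb n r) with false by (symmetry; apply Nat.eqb_neq; lia). ring.
Qed.

Definition cf (k i : nat) : R :=
  if Nat.even i then Bcoef k (Nat.div2 i) / C (4 * k) i else 0.

Definition Pc (k : nat) (u : nat -> vcar Xb) : R :=
  fsum (S (4 * k)) (fun i => cf k i * e (map u (seq 0 (4 * k))) i).

Lemma map_upd {A} (u : nat -> A) i v m : (i < m)%nat ->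
  map (upd u i v) (seq 0 m) = map u (seq 0 i) ++ v :: map u (seq (S i) (m - S i)).
Proof.
  intros H. replace m with (i + (S (m - S i)))%nat at 1 by lia.
  rewrite seq_app, map_app. simpl. f_equal.
  - apply map_ext_in. intros j Hj. apply in_seq in Hj. unfold upd.
    replace (Nat.eqb j i) with false by (symmetry; apply Nat.eqb_neq; lia). reflexivity.
  - unfold upd at 1. rewrite Nat.eqb_refl. f_equal.
    apply map_ext_in. intros j Hj. apply in_seq in Hj. unfold upd.
    replace (Nat.eqb j i) with false by (symmetry; apply Nat.eqb_neq; lia). reflexivity.
Qed.

Lemma fold_mult_a l a : fold_right Rmult a l = fold_right Rmult 1 l * a.
Proof. induction l; simpl; [ring|]. rewrite IHl; ring. Qed.

Lemma fprod_fold m f : fold_right Rmult 1 (map f (seq 0 m)) = fprod m f.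
Proof. induction m; [simpl; auto|]. rewrite seq_S, map_app, fold_right_app. simpl map. simpl (fold_right _ 1 (_ :: nil)).
  rewrite fold_mult_a, IHm. simpl. ring. Qed.

Lemma fold_nonneg l : (forall x, In x l -> 0 <= x) -> 0 <= fold_right Rmult 1 l.
Proof. induction l; simpl; intros H; [lra|]. apply Rmult_le_pos; auto. Qed.

Lemma e_bound l i : Rabs (e l i) <= 2 ^ (length l) * fold_right Rmult 1 (map nrm l).
Proof.
  revert i; induction l as [|p l IH]; intros i; simpl.
  - destruct (Nat.eqb i 0); rewrite ?Rabs_R1, ?Rabs_R0; lra.
  - set (B := 2 ^ length l * fold_right Rmult 1 (map nrm l)).
    assert (HB : 0 <= B) by (eapply Rle_trans; [apply Rabs_pos| apply (IH O)]).
    assert (Hn1 : Rabs (fst p) <= nrm p) by apply Rmax_l.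
    assert (Hn2 : Rabs (snd p) <= nrm p) by apply Rmax_r.
    assert (Hn0 : 0 <= nrm p) by (pose proof (Rabs_pos (fst p)); lra).
    replace (2 * 2 ^ length l * (nrm p * fold_right Rmult 1 (map nrm l))) with (2 * (nrm p * B)) by (unfold B; ring).
    eapply Rle_trans; [apply Rabs_triang|].
    assert (Rabs (snd p * e l i) <= nrm p * B).
    { rewrite Rabs_mult. apply Rmult_le_compat; auto using Rabs_pos. }
    assert (Rabs (match i with O => 0 | S i' => fst p * e l i' end) <= nrm p * B).
    { destruct i. rewrite Rabs_R0. apply Rmult_le_pos; auto.
      rewrite Rabs_mult. apply Rmult_le_compat; auto using Rabs_pos. }
    lra.
Qed.

Lemma fsum_abs n f : Rabs (fsum n f) <= fsum n (fun i => Rabs (f i)).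
Proof. induction n; simpl. rewrite Rabs_R0; lra.
  eapply Rle_trans; [apply Rabs_triang|]. lra. Qed.

Lemma fsum_le n f g : (forall i, (i < n)%nat -> f i <= g i) -> fsum n f <= fsum n g.
Proof. induction n; simpl; intros H; [lra|]. apply Rplus_le_compat; auto. Qed.

Lemma Pc_polar k : is_polar_of Xb (4 * k) (fun x => Pc k (fun _ => x)) (Pc k).
Proof.
  split; [split|split; [|split]].
  - intros u v H. unfold Pc. f_equal. apply functional_extensionality. intros i. f_equal. f_equal.
    apply map_ext_in. intros j Hj. apply in_seq in Hj. apply H. lia.
  - intros u i a b x y Hi. unfold Pc. rewrite !map_upd by exact Hi.
    change (vadd (vscal a x) (vscal b y)) with
      ((a * fst x + b * fst y, a * snd x + b * snd y) : vcar Xb).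
    rewrite <- !fsum_scal, <- fsum_plus. apply fsum_ext. intros j _.
    rewrite e_lin. rewrite Rmult_plus_distr_l, <- !Rmult_assoc, (Rmult_comm (cf k j) a), (Rmult_comm (cf k j) b). reflexivity.
  - intros sigma u Hs Hinj. unfold Pc. f_equal. apply functional_extensionality. intros i. f_equal.
    rewrite <- (map_map sigma u). apply e_perm. apply Permutation_map.
    apply Permutation_map_same_l.
    + apply FinFun.Injective_map_NoDup_in; [|apply seq_NoDup].
      intros x y Hx Hy. apply in_seq in Hx, Hy. apply Hinj; lia.
    + intros z Hz. apply in_map_iff in Hz. destruct Hz as [x [<- Hx]]. apply in_seq in Hx. apply in_seq.
      specialize (Hs x ltac:(lia)). lia.
  - exists (fsum (S (4 * k)) (fun i => Rabs (cf k i)) * 2 ^ (4 * k)). intros u. unfold Pc.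
    eapply Rle_trans; [apply fsum_abs|].
    rewrite Rmult_assoc, <- fsum_scal_r. apply fsum_le. intros i _.
    rewrite Rabs_mult. apply Rmult_le_compat_l; [apply Rabs_pos|].
    eapply Rle_trans; [apply e_bound|]. rewrite length_map, length_seq, map_map, fprod_fold. apply Rle_refl.
  - intros x. reflexivity.
Qed.

Lemma C_neq0 n i : C n i <> 0.
Proof.
  unfold C, Rdiv. apply Rmult_integral_contrapositive_currified. apply INR_fact_neq_0.
  apply Rinv_neq_0_compat. apply Rmult_integral_contrapositive_currified; apply INR_fact_neq_0.
Qed.

Lemma P_val k a b : Pc k (fun _ => (a, b)) = ((a^2)^2 + (b^2)^2 - 3 * (a^2) * (b^2)) ^ k.
Proof.
  unfold Pc. rewrite map_const, length_seq.
  rewrite (fsum_ext _ _ (fun i => cf k i * (bin (4 * k) i * a ^ i * b ^ (4 * k - i)))).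
  2:{ intros i _. rewrite e_repeat. reflexivity. }
  replace (S (4 * k)) with (S (2 * (2 * k))) by lia.
  rewrite fsum_even.
  2:{ intros i Hi. unfold cf. rewrite <- Nat.negb_odd, Hi. simpl. ring. }
  rewrite <- (tri_identity k (a^2) (b^2)).
  apply fsum_ext. intros j Hj. unfold cf. rewrite Nat.even_even, Nat.div2_double.
  rewrite bin_C by lia.
  replace (4 * k - 2 * j)%nat with (2 * (2 * k - j))%nat by lia.
  rewrite !pow_mult. field. apply C_neq0.
Qed.

Lemma e_basisJ (J : nat -> nat) l i : e (map (fun x => basis (J x)) l) i = if Nat.eqb i (cntz (map J l)) then 1 else 0.
Proof. rewrite <- e_basis. rewrite map_map. reflexivity. Qed.

Lemma msum_val k p : msum (4 * k) 2 (fun J => rpow (Rabs (Pc k (fun i => basis (J i)))) p) =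
   fsum (S (4 * k)) (fun i => bin (4 * k) i * rpow (Rabs (cf k i)) p).
Proof.
  rewrite (msum_ext _ _ _ (fun J => (fun c => rpow (Rabs (cf k c)) p) (cntz (map J (seq 0 (4 * k))) + 0)%nat)).
  - rewrite (msum_count (4 * k) (fun c => rpow (Rabs (cf k c)) p) 0). apply fsum_ext. intros i _. rewrite Nat.add_0_r. reflexivity.
  - intros J. rewrite Nat.add_0_r. unfold Pc.
    rewrite (fsum_ext _ _ (fun i => cf k i * (if Nat.eqb i (cntz (map J (seq 0 (4 * k)))) then 1 else 0))).
    2:{ intros i _. rewrite e_basisJ. reflexivity. }
    rewrite fsum_delta.
    replace (Nat.ltb (cntz (map J (seq 0 (4 * k)))) (S (4 * k))) with true. reflexivity.
    symmetry. apply Nat.ltb_lt. pose proof (cntz_le (map J (seq 0 (4 * k)))).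
    rewrite length_map, length_seq in H. lia.
Qed.

Lemma fprod_1 m : fprod m (fun _ => 1) = 1.
Proof. induction m; simpl; auto. rewrite IHm; ring. Qed.

Lemma rpow0 p : rpow 0 p = 0.
Proof. unfold rpow. destruct (Req_EM_T 0 0); auto. contradiction. Qed.

Lemma base_bound a b : Rabs a <= 1 -> Rabs b <= 1 ->
  Rabs ((a^2)^2 + (b^2)^2 - 3 * (a^2) * (b^2)) <= 1.
Proof.
  intros Ha Hb.
  assert (HX : 0 <= a^2 <= 1). { split. nra. unfold Rabs in Ha; destruct (Rcase_abs a); nra. }
  assert (HY : 0 <= b^2 <= 1). { split. nra. unfold Rabs in Hb; destruct (Rcase_abs b); nra. }
  set (X := a^2) in *. set (Y := b^2) in *.
  apply Rabs_le. split.
  - assert (X * Y <= 1) by nra. assert (0 <= X ^ 2 + Y ^ 2 - 2 * X * Y) by (replace (X ^ 2 + Y ^ 2 - 2 * X * Y) with ((X - Y) ^ 2) by ring; apply pow2_ge_0). nra.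
  - assert (0 <= X * (1 - X)) by nra. assert (0 <= Y * (1 - Y)) by nra.
    assert (0 <= (1 - X) * (1 - Y)) by nra. assert (0 <= X * Y) by nra. nra.
Qed.

Lemma pow_le1 x n : 0 <= x <= 1 -> x ^ n <= 1.
Proof. intros H; induction n; simpl; [lra|]. nra. Qed.

Lemma poly_lub k : is_lub (poly_norm_set Xb (fun x => Pc k (fun _ => x))) 1.
Proof.
  split.
  - intros r [[a b] [Hn ->]]. rewrite P_val. rewrite <- RPow_abs. apply pow_le1.
    split; [apply Rabs_pos|]. unfold vnorm in Hn; simpl in Hn; unfold nrm in Hn; simpl in Hn.
    apply base_bound; eapply Rle_trans; [apply Rmax_l| exact Hn| apply Rmax_r| exact Hn].
  - intros B HB. apply HB. exists ((0, 1) : vcar Xb). split.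
    + simpl. unfold nrm; simpl. rewrite Rabs_R0, Rabs_R1. unfold Rmax; destruct (Rle_dec 0 1); lra.
    + rewrite P_val. replace ((0 ^ 2) ^ 2 + (1 ^ 2) ^ 2 - 3 * 0 ^ 2 * 1 ^ 2) with 1 by ring.
      rewrite pow1, Rabs_R1. reflexivity.
Qed.

Lemma weak_lub : is_lub (weak1_set Xb 2 (fun j => basis j)) 1.
Proof.
  split.
  - intros r [phi [[Hadd [Hsc Hb]] ->]].
    assert (Key : forall s0 s1, Rabs s0 <= 1 -> Rabs s1 <= 1 ->
               s0 * phi ((1, 0) : vcar Xb) + s1 * phi ((0, 1) : vcar Xb) <= 1).
    { intros s0 s1 H0 H1.
      rewrite <- (Hsc s0), <- (Hsc s1), <- Hadd.
      eapply Rle_trans; [apply Rle_abs|]. eapply Rle_trans; [apply Hb|].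
      simpl. unfold nrm; simpl. apply Rmax_lub.
      + replace (s0 * 1 + s1 * 0) with s0 by ring. auto.
      + replace (s0 * 0 + s1 * 1) with s1 by ring. auto. }
    simpl. unfold basis; simpl.
    assert (R1a : Rabs 1 <= 1) by (rewrite Rabs_R1; lra).
    assert (R1b : Rabs (-1) <= 1) by (rewrite Rabs_left; lra).
    destruct (Rle_dec 0 (phi ((1, 0) : vcar Xb))); destruct (Rle_dec 0 (phi ((0, 1) : vcar Xb))).
    + rewrite (Rabs_right (phi _)) by lra. rewrite (Rabs_right (phi ((0,1) : vcar Xb))) by lra.
      pose proof (Key 1 1 R1a R1a). lra.
    + rewrite (Rabs_right (phi _)) by lra. rewrite (Rabs_left (phi ((0,1) : vcar Xb))) by lra.
      pose proof (Key 1 (-1) R1a R1b). lra.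
    + rewrite (Rabs_left (phi ((1,0) : vcar Xb))) by lra. rewrite (Rabs_right (phi ((0,1) : vcar Xb))) by lra.
      pose proof (Key (-1) 1 R1b R1a). lra.
    + rewrite (Rabs_left (phi ((1,0) : vcar Xb))) by lra. rewrite (Rabs_left (phi ((0,1) : vcar Xb))) by lra.
      pose proof (Key (-1) (-1) R1b R1b). lra.
  - intros B HB. apply HB. exists (fun v : vcar Xb => fst v). split.
    + split; [|split].
      * intros; reflexivity.
      * intros; reflexivity.
      * intros [x y]. simpl. unfold nrm; simpl. apply Rmax_l.
    + simpl. unfold basis; simpl. rewrite Rabs_R1, Rabs_R0. ring.
Qed.

Theorem mainTheorem6 (k : nat) (hk : (1 <= k)%nat) (L : R)
  (HL : BH_const (4 * k) L) : lower_bound k <= L.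
Proof.
  pose proof (HL Xb (fun x => Pc k (fun _ => x)) (Pc k) (Pc_polar k) 2%nat (fun _ j => basis j) 1 (fun _ => 1)
     (poly_lub k) (fun _ _ => weak_lub)) as Hm.
  cbv beta in Hm. rewrite fprod_1, !Rmult_1_r in Hm.
  rewrite msum_val in Hm.
  eapply Rle_trans; [|exact Hm]. right.
  unfold lower_bound.
  assert (Hk : 0 <= INR k) by apply pos_INR.
  assert (Ep : 2 * INR (4 * k) / (INR (4 * k) + 1) = 8 * INR k / (4 * INR k + 1)).
  { rewrite mult_INR. simpl INR. field. lra. }
  assert (Eq : (INR (4 * k) + 1) / (2 * INR (4 * k)) = (4 * INR k + 1) / (8 * INR k)).
  { rewrite mult_INR. simpl INR. assert (0 < INR k) by (apply lt_0_INR; lia). field. lra. }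
  rewrite Ep, Eq. f_equal.
  replace (S (4 * k)) with (S (2 * (2 * k))) by lia.
  rewrite (fsum_even (2 * k)).
  2:{ intros i Hi. unfold cf. rewrite <- Nat.negb_odd, Hi. simpl. rewrite Rabs_R0, rpow0. ring. }
  symmetry. apply fsum_ext. intros j Hj. unfold cf. rewrite Nat.even_even, Nat.div2_double.
  rewrite bin_C by lia. reflexivity.
Qed.
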